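(* Let $G$ be a finite group and let $H$ be a non-trivial cyclic $2$-subgroup of $G$. Then $H$ is a perfect code of $G$ if and only if $H$ is not contained in any subgroup $K$ of $G$ such that $|K|/|H|=2$ and $K$ is either cyclic or generalized quaternion.
   Context: For a group $G$ with identity $e$ and an inverse-closed subset $S\subseteq G\setminus\{e\}$, the Cayley graph $\mathrm{Cay}(G,S)$ has vertex set $G$ and edges $\{g,sg\}$ for $s\in S$, $g\in G$. A perfect code in a graph is an independent set $C$ of vertices such that every vertex outside $C$ is adjacent to exactly one vertex of $C$. A subgroup $H$ of $G$ is a perfect code of $G$ if some Cayley graph of $G$ admits $H$ as a perfect code. *)

(* Defs.v *)
From mathcomp Require Import all_boot all_algebra all_fingroup all_solvable.
Set Implicit Arguments. Unset Strict Implicit. Unset Printing Implicit Defensive.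
Import GroupScope.

Definition cay_adj (gT : finGroupType) (S : {set gT}) (x y : gT) : bool :=
  x * y^-1 \in S.

Definition connection_set (gT : finGroupType) (G S : {set gT}) : Prop :=
  S \subset G :\ 1 /\ (forall s, s \in S -> s^-1 \in S).

Definition cay_perfect_code (gT : finGroupType) (G S C : {set gT}) : Prop :=
  [/\ C \subset G,
      (forall x y, x \in C -> y \in C -> ~~ cay_adj S x y) &
      (forall g, g \in G -> g \notin C ->
         #|[set c in C | cay_adj S g c]| = 1%N)].

Definition subgroup_perfect_code (gT : finGroupType) (G H : {set gT}) : Prop :=
  exists S : {set gT}, connection_set G S /\ cay_perfect_code G S H.

Definition gen_quaternion (gT : finGroupType) (K : {set gT}) : Prop :=
  exists2 n, 2 < n & K \isog 'Q_(2 ^ n).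

(* Main.v *)
Require Import Defs.
From mathcomp Require Import all_boot all_algebra all_fingroup all_solvable.
Import GroupScope.
Set Implicit Arguments. Unset Strict Implicit. Unset Printing Implicit Defensive.


Lemma match_lemma (gT : finGroupType) (H : {group gT}) (C : {set gT}) :
  (forall y, y \in C -> y^-1 \in C) ->
  (forall y1 y2, y1 \in C -> y2 \in C -> y1^-1 * y2 \in H -> y1 * y2^-1 \in H) ->
  (forall y, y \in C -> y * y \in H -> y^-1 = y) ->
  exists S : {set gT}, [/\ S \subset C, (forall s, s \in S -> s^-1 \in S) &
     forall z, z \in C -> exists s, forall w,
        ((w \in S) && (z^-1 * w \in H)) = (w == s)].
Proof.
move: {2}#|C| (leqnn #|C|) => n; elim: n C => [|n IH] C.
  rewrite leqn0 => /eqP/cards0_eq -> _ _ _.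
  by exists set0; split=> // [s|z]; rewrite inE.
move=> leC Cinv Cb Cc.
have [C0|[y yC]] := set_0Vmem C.
  by exists set0; rewrite C0; split=> // [s|z]; rewrite inE.
pose C' := C :\: [set w | (y^-1 * w \in H) || (y * w \in H)].
have yC' : y \notin C' by rewrite !inE mulVg group1.
have sC' : C' \subset C by apply: subsetDl.
have leC' : #|C'| <= n.
  rewrite -ltnS (leq_trans _ leC) //; apply: proper_card.
  by apply/properP; split=> //; exists y.
have [S' [sS' S'inv S'u]] : exists S : {set gT}, [/\ S \subset C', (forall s, s \in S -> s^-1 \in S) &
     forall z, z \in C' -> exists s, forall w,
        ((w \in S) && (z^-1 * w \in H)) = (w == s)].
  apply: IH => //.
  - move=> w; rewrite !inE negb_or => /andP[/andP[h1 h2] wC].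



    rewrite Cinv // andbT negb_or; apply/andP; split.
      apply: contra h2 => h; have := Cb _ _ yC (Cinv _ wC) h.
      by rewrite invgK.
    apply: contra h1 => h.
    have := Cb y^-1 w^-1 (Cinv _ yC) (Cinv _ wC); rewrite !invgK; exact.
  - move=> y1 y2 /(subsetP sC') h1 /(subsetP sC') h2; exact: Cb.
  - move=> y1 /(subsetP sC') h1; exact: Cc.
exists (S' :|: [set y; y^-1]); split.
- apply/subsetP=> w; rewrite !inE => /orP[/(subsetP sS')/(subsetP sC') //|].
  by case/orP=> /eqP->; rewrite ?Cinv.
- move=> s; rewrite !inE => /orP[/S'inv -> //|].
  by case/orP=> /eqP->; rewrite ?invgK eqxx ?orbT.
move=> z zC.
have S'C' : forall w, w \in S' -> w \in C' by move=> w /(subsetP sS').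
have [zC'|zNC'] := boolP (z \in C').
  have [s Hs] := S'u z zC'; exists s => w.
  rewrite !inE; case wS: (w \in S') => /=; first by rewrite -Hs wS.
  have sS : s \in S' by have := Hs s; rewrite eqxx => /andP[].
  have -> : (w == s) = false by apply/eqP=> ws; rewrite ws sS in wS.
  move: zC'; rewrite !inE negb_or => /andP[/andP[z1 z2] _].
  apply/negbTE; rewrite negb_and; case/orP: (orbN (w == y)) => [/eqP->|wy].
    rewrite orbC; apply/orP; left; apply: contra z1 => h.
    by rewrite -(invgK (y^-1 * z)) groupV invMg invgK.
  rewrite (negbTE wy) /=; apply/orP; case: eqP => [->|]; last by left.
  right; apply: contra z2 => h.
  by rewrite -(invgK (y * z)) groupV invMg.
move: zNC'; rewrite !inE zC andbT negbK => /orP[hz|hz].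
- exists y => w; rewrite !inE.
  case wS: (w \in S') => /=.
    have := S'C' _ wS; rewrite !inE => /andP[/norP[w1 _] _].
    have nw : z^-1 * w \notin H.
      by apply: contra w1 => h; rewrite -(mulKVg z w) mulgA groupM.
    rewrite (negbTE nw); apply/esym/eqP => wy; rewrite wy in wS.
    by move: (S'C' _ wS); rewrite (negbTE yC').
  case: (eqVneq w y) => [->|wy] /=.
    by rewrite -(invgK (z^-1 * y)) invMg invgK groupV.
  apply/negbTE/andP => -[/eqP wv hw].
  have yy : y * y \in H.
    have h2 : (y^-1 * z) * (z^-1 * y^-1) \in H by rewrite groupM // -wv.
    by rewrite mulgA mulgK -invMg groupV in h2.
  by move/eqP: wy; apply; rewrite wv (Cc _ yC yy).
- exists y^-1 => w; rewrite !inE.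
  case wS: (w \in S') => /=.
    have := S'C' _ wS; rewrite !inE => /andP[/norP[_ w2] _].
    have nw : z^-1 * w \notin H.
      by apply: contra w2 => h; rewrite -(mulKVg z w) mulgA groupM.
    rewrite (negbTE nw); apply/esym/eqP => wy; rewrite wy in wS.
    have := S'C' _ wS; rewrite !inE mulgV group1 orbT //.
  case: (eqVneq w y^-1) => [->|wy] /=; first by rewrite orbT -invMg groupV.
  rewrite orbF; apply/negbTE/andP => -[/eqP wv hw].
  have yy : y * y \in H.
    have h2 : (y * z) * (z^-1 * y) \in H by rewrite groupM // -wv.
    by rewrite mulgA mulgK in h2.
  by move/eqP: wy; apply; rewrite wv -{1}(Cc _ yC yy).
Qed.

Definition dcos (gT : finGroupType) (H : {set gT}) (x : gT) : {set gT} :=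
  [set y | [exists u in H, [exists v in H, y == u * x * v]]].
Definition ucos (gT : finGroupType) (H : {set gT}) (x : gT) : {set gT} :=
  dcos H x :|: dcos H x^-1.

Lemma dcosP (gT : finGroupType) (H : {set gT}) x y :
  reflect (exists2 u, u \in H & exists2 v, v \in H & y = u * x * v)
          (y \in dcos H x).
Proof.
rewrite inE; apply: (iffP existsP) => [[u /andP[uH /existsP[v /andP[vH /eqP e]]]]|].
  by exists u => //; exists v.
case=> u uH [v vH e]; exists u; rewrite uH; apply/existsP; exists v.
by rewrite vH e eqxx.
Qed.

Lemma dcos_id (gT : finGroupType) (H : {group gT}) x : x \in dcos H x.
Proof. by apply/dcosP; exists 1 => //; exists 1; rewrite ?mulg1 ?mul1g. Qed.

Lemma dcos_trans (gT : finGroupType) (H : {group gT}) x z :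
  z \in dcos H x -> dcos H z = dcos H x.
Proof.
case/dcosP=> u uH [v vH ->]; apply/setP=> y; apply/dcosP/dcosP.
  case=> u' u'H [v' v'H ->]; exists (u' * u); rewrite ?groupM //.
  by exists (v * v'); rewrite ?groupM // !mulgA.
case=> u' u'H [v' v'H ->]; exists (u' * u^-1); rewrite ?groupM ?groupV //.
exists (v^-1 * v'); rewrite ?groupM ?groupV //.
by rewrite !mulgA mulgKV mulgK.
Qed.

Lemma dcos_inv (gT : finGroupType) (H : {group gT}) x z :
  z \in dcos H x -> z^-1 \in dcos H x^-1.
Proof.
case/dcosP=> u uH [v vH ->]; apply/dcosP; exists v^-1; rewrite ?groupV //.
by exists u^-1; rewrite ?groupV // !invMg mulgA.
Qed.

Lemma ucos_trans (gT : finGroupType) (H : {group gT}) x z :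
  z \in ucos H x -> ucos H z = ucos H x.
Proof.
rewrite /ucos inE => /orP[zx|zx].
  by rewrite (dcos_trans zx) (dcos_trans (dcos_inv zx)).
rewrite (dcos_trans zx) setUC; have := dcos_inv zx; rewrite invgK => h.
by rewrite (dcos_trans h).
Qed.

Lemma ucos_id (gT : finGroupType) (H : {group gT}) x : x \in ucos H x.
Proof. by rewrite inE dcos_id. Qed.

Lemma dcos_coset (gT : finGroupType) (H : {group gT}) x z w :
  z \in dcos H x -> z^-1 * w \in H -> w \in dcos H x.
Proof.
case/dcosP=> u uH [v vH e] h; apply/dcosP; exists u => //.
exists (v * (z^-1 * w)); first by rewrite groupM.
by rewrite mulgA -e mulKVg.
Qed.

Lemma ucos_coset (gT : finGroupType) (H : {group gT}) x z w :
  z \in ucos H x -> z^-1 * w \in H -> w \in ucos H x.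
Proof.
rewrite inE => /orP[h|h] hw; first by rewrite inE (dcos_coset h hw).
by rewrite inE (dcos_coset h hw) orbT.
Qed.

Lemma dcos_notin (gT : finGroupType) (G H : {group gT}) x :
  H \subset G -> x \in G -> x \notin H -> dcos H x \subset G :\: H.
Proof.
move=> sHG xG xH; apply/subsetP=> y /dcosP[u uH [v vH ->]].
have uG := subsetP sHG _ uH; have vG := subsetP sHG _ vH.
rewrite inE; apply/andP; split; last by rewrite !groupM.
apply: contra xH => h.
rewrite (_ : x = u^-1 * (u * x * v) * v^-1); last by rewrite !mulgA mulVg mul1g mulgK.
by apply: groupM; [apply: groupM; rewrite ?groupV | rewrite groupV].
Qed.

Lemma ucos_notin (gT : finGroupType) (G H : {group gT}) x :
  H \subset G -> x \in G -> x \notin H -> ucos H x \subset G :\: H.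
Proof.
move=> sHG xG xH; rewrite subUset !dcos_notin ?groupV //.
Qed.

Definition good (gT : finGroupType) (H U S : {set gT}) : bool :=
  [&& S \subset U, [forall s in S, s^-1 \in S] &
      [forall z in U, #|[set c in H | z * c^-1 \in S]| == 1%N]].

Lemma uniq_card (gT : finGroupType) (H : {group gT}) (S : {set gT}) z :
  (exists s, forall w, ((w \in S) && (z^-1 * w \in H)) = (w == s)) ->
  #|[set c in H | z * c^-1 \in S]| == 1%N.
Proof.
case=> s Hs; apply/cards1P; exists (s^-1 * z); apply/setP=> c.
rewrite !inE; have := Hs (z * c^-1); rewrite mulKg groupV andbC => ->.
by apply/eqP/eqP => [<-|->]; rewrite invMg invgK ?mulgKV ?mulKVg.
Qed.

Lemma bridge (gT : finGroupType) (H : {group gT}) x w :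
  cyclic H -> w \in H -> (w \in H :^ x^-1) = (w \in H :^ x).
Proof.
move=> cH wH.
have e : (H :&: H :^ x^-1)%G :=: (H :&: H :^ x)%G.
  apply/eqP; rewrite (eq_subG_cyclic cH) ?subsetIl //=.
  rewrite -(cardJg _ x) conjIg conjsgKV setIC //.
have := congr1 (fun A : {set gT} => w \in A) e; rewrite /= !inE wH /=; exact.
Qed.

Lemma gen_odd (gT : finGroupType) (H : {group gT}) g0 h :
  H :=: <[g0]> -> 2.-group H -> h \in H -> <[h * g0 * h]> = H.
Proof.
move=> defH pH hH; rewrite defH in hH *.
case/cycleP: hH => m ->.
rewrite -expgSr -expgD; apply/esym/eqP.
have := generator_coprime g0 (m.+1 + m); rewrite /generator => ->.
have [k ok] := p_natP pH.
have -> : #[g0] = (2 ^ k)%N by rewrite orderE -defH.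
by apply: coprimeXl; rewrite coprime2n addSn /= oddD addbb.
Qed.


Lemma glue1 (gT : finGroupType) (a b c : gT) : a * b = (a * c^-1) * (c * b).
Proof. by rewrite mulgA mulgKV. Qed.
Lemma glue2 (gT : finGroupType) (a b c : gT) : a * b = (a * c) * (c^-1 * b).
Proof. by rewrite mulgA mulgK. Qed.

Lemma midL (gT : finGroupType) (H : {group gT}) a b c d :
  a^-1 * b \in H -> c^-1 * d \in H -> (b^-1 * d \in H) = (a^-1 * c \in H).
Proof.
move=> h1 h2.
have -> : b^-1 * d = (a^-1 * b)^-1 * (a^-1 * c) * (c^-1 * d).
  by rewrite invMg invgK !mulgA mulgK mulgK.
by rewrite groupMr // groupMl ?groupV.
Qed.

Lemma midR (gT : finGroupType) (H : {group gT}) a b c d :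
  b * a^-1 \in H -> d * c^-1 \in H -> (b * d^-1 \in H) = (a * c^-1 \in H).
Proof.
move=> h1 h2.
have -> : b * d^-1 = (b * a^-1) * (a * c^-1) * (d * c^-1)^-1.
  by rewrite invMg invgK !mulgA mulgKV mulgKV.
by rewrite groupMr ?groupV // groupMl.
Qed.

Lemma localC (gT : finGroupType) (G H : {group gT}) g0 x :
  H \subset G -> H :=: <[g0]> -> 2.-group H -> x \in G -> x \notin H ->
  (x^-1 \notin dcos H x) \/ (x * x \in H /\ ~~ (H \subset H :^ x^-1)) ->
  exists S, good H (ucos H x) S.
Proof.
move=> sHG defH pH xG xH hyp.
have g0H : g0 \in H by rewrite defH cycle_id.
have cH : cyclic H by rewrite defH cycle_cyclic.
have comm : forall a b, a \in H -> b \in H -> a * b = b * a.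
  move=> a b aH bH; have cHH := cyclic_abelian cH.
  exact: (centsP cHH a aH b bH).
pose C0 := [set y | [exists h in H, ((h * x)^-1 * y \in H) && (y * (x * h * g0)^-1 \in H)]].
have C0P : forall y, reflect (exists2 h, h \in H & ((h * x)^-1 * y \in H) /\ (y * (x * h * g0)^-1 \in H)) (y \in C0).
  move=> y; rewrite inE; apply: (iffP existsP) => [[h /andP[hH /andP[p q]]]|[h hH [p q]]].
    by exists h.
  by exists h; rewrite hH p q.
have C0mem : forall h, h \in H -> h * x * (h * g0) \in C0.
  move=> h hH; apply/C0P; exists h => //; split; first by rewrite mulKg groupM.
  by rewrite (_ : h * x * (h * g0) = h * (x * h * g0)) ?mulgK // !mulgA.
have C0D : forall y, y \in C0 -> y \in dcos H x.
  move=> y /C0P[h hH [p _]]; apply/dcosP; exists h => //.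
  by exists ((h * x)^-1 * y) => //; rewrite mulKVg.
have LR : forall y1 y2, y1 \in C0 -> y2 \in C0 -> (y1^-1 * y2 \in H) = (y1 * y2^-1 \in H).
  move=> y1 y2 /C0P[h1 h1H [p1 q1]] /C0P[h2 h2H [p2 q2]].
  rewrite (midL p1 p2) (midR q1 q2).
  have -> : (h1 * x)^-1 * (h2 * x) = (h1^-1 * h2) ^ x by rewrite conjgE invMg !mulgA.
  have -> : x * h1 * g0 * (x * h2 * g0)^-1 = (h1 * h2^-1) ^ x^-1.
    by rewrite conjgE invgK !invMg !mulgA mulgK.
  have cj : forall w z, (w ^ z \in H) = (w \in H :^ z^-1) by move=> w z; rewrite mem_conjg invgK.
  rewrite !cj invgK.
  rewrite (@bridge _ H x (h1^-1 * h2) cH); last by rewrite groupM ?groupV.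
  have -> : h1^-1 * h2 = (h1 * h2^-1)^-1 by rewrite invMg invgK comm ?groupV.
  by rewrite groupV.
have casei : x^-1 \notin dcos H x -> forall y1 y2, y1 \in dcos H x ->
    y2 \in dcos H x^-1 -> y1^-1 * y2 \in H -> False.
  move=> nx y1 y2 y1D y2D h.
  have y2D' := dcos_coset y1D h.
  move: nx; rewrite -(dcos_trans y2D') (dcos_trans y2D) dcos_id //.
have ii_inv : x * x \in H -> forall y, y \in C0 -> y^-1 \in C0.
  move=> xx y /C0P[h hH [p q]]; apply/C0P; exists (h^-1 * g0^-1).
    by rewrite groupM ?groupV.
  split.
    rewrite -invMg groupV (glue1 y _ (x * h * g0)) groupM //.
    rewrite -(mulgA x h g0) (comm h g0) // !mulgA mulgK mulgK //.
  rewrite -invMg groupV (glue2 _ y (h * x)) groupM //.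
  by rewrite !mulgA mulgKV mulgKV.
have ii_c : x * x \in H -> ~~ (H \subset H :^ x^-1) -> forall y, y \in C0 ->
    y * y \in H -> False.
  move=> xx nsub y /C0P[h hH [p q]] yy.
  have P1 : (x * h * g0) * (h * x) \in H.
    have -> : (x * h * g0) * (h * x) =
        (y * (x * h * g0)^-1)^-1 * (y * y) * ((h * x)^-1 * y)^-1.
      rewrite !invMg !invgK.
      move: (x * h * g0) (h * x) => a b.
      by rewrite !mulgA mulgKV mulgK.
    by apply: groupM; [apply: groupM => //; rewrite groupV | rewrite groupV].
  set m := h * g0 * h.
  have mx : m ^ x^-1 \in H.
    have -> : m ^ x^-1 = (x * h * g0 * (h * x)) * (x * x)^-1.
      by rewrite conjgE invgK !invMg !mulgA mulgK.
    by rewrite groupM ?groupV.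
  have mH : m \in H by rewrite !groupM.
  move: mx; rewrite -mem_conjg -bridge // => mx.
  move/negP: nsub; apply. rewrite -{1}(gen_odd defH pH hH). by rewrite (@cycle_subG _ _ (H :^ x^-1)%G).
pose C := [set y | (y \in C0) || (y^-1 \in C0)].
have Cin : forall y, (y \in C) = (y \in C0) || (y^-1 \in C0).
  by move=> y; rewrite /C in_set.
have [S [sSC Sinv Su]] : exists S : {set gT}, [/\ S \subset C, (forall s, s \in S -> s^-1 \in S) &
     forall z, z \in C -> exists s, forall w,
        ((w \in S) && (z^-1 * w \in H)) = (w == s)].
  apply: match_lemma.
  - by move=> y; rewrite !Cin invgK orbC.
  - move=> y1 y2; rewrite !Cin.
    case: hyp => [nx|[xx _]]; last first.
      have C0C : forall y, (y \in C0) || (y^-1 \in C0) -> y \in C0.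
        by move=> y /orP[//|/(ii_inv xx)]; rewrite invgK.
      by move=> /C0C y1C /C0C y2C h; rewrite -LR.
    move=> /orP[y1C|y1C] /orP[y2C|y2C] h.
    + by rewrite -LR.
    + case: (casei nx y1 y2 (C0D _ y1C)) => //.
      by rewrite -(invgK y2) dcos_inv // C0D.
    + case: (casei nx y2 y1 (C0D _ y2C)) => //.
        by rewrite -(invgK y1) dcos_inv // C0D.
      by rewrite -(invgK (y2^-1 * y1)) groupV invMg invgK.
    + by have := LR _ _ y1C y2C; rewrite !invgK => ->.
  - move=> y; rewrite Cin => yC yy; exfalso.
    case: hyp => [nx|[xx nsub]].
      case/orP: yC => yC.
        apply: (casei nx y y^-1 (C0D _ yC)); first by rewrite dcos_inv // C0D.
        by rewrite -invMg groupV.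
      apply: (casei nx y^-1 y (C0D _ yC)); last by rewrite invgK.
      by rewrite -(invgK y) dcos_inv // C0D.
    case/orP: yC => yC; first exact: (ii_c xx nsub y yC yy).
    by have := ii_inv xx _ yC; rewrite invgK => yC'; exact: (ii_c xx nsub y yC' yy).
exists S; apply/and3P; split.
- apply/subsetP=> y /(subsetP sSC); rewrite Cin => /orP[/C0D h|/C0D h].
    by apply/setUP; left.
  by apply/setUP; right; rewrite -(invgK y) dcos_inv.
- by apply/forall_inP => s /Sinv.
apply/forall_inP => z zU; apply: uniq_card.
have [y yC zy] : exists2 y, y \in C & z^-1 * y \in H.
  move: zU; rewrite /ucos in_setU => /orP[] /dcosP[u uH [v vH ->]].
    exists (u * x * (u * g0)); first by rewrite Cin C0mem.
    have -> : (u * x * v)^-1 * (u * x * (u * g0)) = v^-1 * (u * g0).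
      by rewrite invMg -mulgA mulKg.
    by rewrite groupM ?groupV // groupM.
  pose h := u^-1 * g0^-1.
  have hH : h \in H by rewrite groupM ?groupV.
  exists (h * x * (h * g0))^-1; first by rewrite Cin invgK C0mem ?orbT.
  rewrite -invMg groupV.
  have -> : h * g0 = u^-1 by rewrite /h mulgKV.
  have -> : h * x * u^-1 * (u * x^-1 * v) = h * v.
    by rewrite !mulgA mulgKV mulgK.
  by rewrite groupM.
have [s Hs] := Su y yC; exists s => w; rewrite -Hs.
have -> : y^-1 * w = (y^-1 * z) * (z^-1 * w) by rewrite mulgA mulgK.
have yz : y^-1 * z \in H by rewrite -(invgK (y^-1 * z)) groupV invMg invgK.
by rewrite (groupMl _ yz).
Qed.




Lemma invol_exists (gT : finGroupType) (G H : {group gT}) x :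
  H \subset G -> cyclic H -> 2.-group H -> H :!=: 1 -> x \in G -> x \notin H ->
  x * x \in H -> H \subset H :^ x^-1 ->
  ~ (exists K : {group gT},
        [/\ K \subset G, H \subset K, #|K| = (2 * #|H|)%N &
            (cyclic K \/ gen_quaternion K)]) ->
  exists2 t, x^-1 * t \in H & t * t = 1.
Proof.
move=> sHG cH pH ntH xG xH xx sHHx noK.
have xN : x \in 'N(H).
  rewrite -groupV; apply/normP/esym/eqP; rewrite eqEcard sHHx cardJg leqnn //.
pose K := (H <*> <[x]>)%G.
have defK : K :=: H * <[x]> by rewrite /= norm_joinEr // cycle_subG.
have powx : forall i, (x ^+ i \in H) || (x^-1 * x ^+ i \in H).
  elim=> [|i IH]; first by rewrite expg0 group1.
  case/orP: IH => h; first by rewrite expgS mulKg h orbT.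
  by rewrite expgS (glue2 x (x ^+ i) x) groupM.
have Kchar : forall k, k \in K -> (k \in H) || (x^-1 * k \in H).
  move=> k; rewrite defK => /mulsgP[h w hH /cycleP[i ->] ->].
  case/orP: (powx i) => hi; first by rewrite groupM.
  have -> : x^-1 * (h * x ^+ i) = h ^ x * (x^-1 * x ^+ i).
    by rewrite conjgE !mulgA mulgK.
  by apply/orP; right; rewrite groupM ?memJ_norm.
have sHK : H \subset K by rewrite joing_subl.
have xK : x \in K by rewrite -cycle_subG joing_subr.
have sKG : K \subset G by rewrite join_subG sHG cycle_subG.
have cardK : #|K| = (2 * #|H|)%N.
  have le1 : #|K| <= 2 * #|H|.
    have sK : K \subset H :|: x *: H.
      apply/subsetP=> k kK; rewrite inE mem_lcoset; exact: Kchar.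
    apply: (leq_trans (subset_leq_card sK)); rewrite mul2n -addnn.
    by rewrite -{2}(card_lcoset H x); apply: leq_card_setU.
  have lt1 : #|H| < #|K|.
    by apply: proper_card; apply/properP; split=> //; exists x.
  have [q eq] : exists q, #|K| = (q * #|H|)%N.
    by exists (#|K| %/ #|H|); rewrite divnK // cardSg.
  have Hpos : 0 < #|H| := cardG_gt0 H.
  rewrite eq in le1 lt1 *; congr (_ * _)%N.
  move: le1 lt1; rewrite leq_pmul2r // -{1}(mul1n #|H|) ltn_pmul2r //.
  by case: q {eq} => [|[|[|q]]].
have pK : 2.-group K.
  by rewrite /pgroup cardK pnatM pnat_id.
have ntK : K :!=: 1.
  by apply: contra ntH => /eqP K1; rewrite -subG1 -K1.
have nO : #|'Ohm_1(K)| != 2.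
  apply/eqP => /(prime_Ohm1P pK ntK) /orP h; apply: noK; exists K; split=> //.
  case: h => [|/andP[_ /eqP /quaternion_classP]]; first by left.
  by right.
case: (boolP [exists t in K, (t \notin H) && (t * t == 1)]).
  case/exists_inP=> t tK /andP[tH /eqP tt]; exists t => //.
  by case/orP: (Kchar t tK) => //; rewrite (negbTE tH).
rewrite negb_exists_in => /forall_inP nt.
case/eqP: nO.
have <- : 'Ohm_1(H) = 'Ohm_1(K).
  apply/eqP; rewrite eqEsubset OhmS //=.
  rewrite (OhmE 1 pK) (OhmE 1 pH) genS //.
  apply/subsetP=> t; rewrite !inE => /andP[tK t2]; rewrite t2 andbT.
  apply: contraT => tH; have := nt t tK; rewrite tH /= -expg2; move/eqP: t2.
  by rewrite expn1 => ->; rewrite eqxx.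
exact: Ohm1_cyclic_pgroup_prime.
Qed.


Lemma local_all (gT : finGroupType) (G H : {group gT}) x :
  H \subset G -> cyclic H -> 2.-group H -> H :!=: 1 ->
  ~ (exists K : {group gT},
        [/\ K \subset G, H \subset K, #|K| = (2 * #|H|)%N &
            (cyclic K \/ gen_quaternion K)]) ->
  x \in G -> x \notin H -> exists S, good H (ucos H x) S.
Proof.
move=> sHG cH pH ntH noK xG xH.
have [g0 defH] := cyclicP cH.
case: (boolP (x^-1 \in dcos H x)) => [xin|xnin]; last first.
  by apply: (localC sHG defH pH xG xH); left.
case/dcosP: xin => u uH [v vH e].
pose y := u * x.
have yU : y \in ucos H x.
  rewrite inE; apply/orP; left; apply/dcosP; exists u => //; exists 1; rewrite ?mulg1 //.
have ey : y^-1 = y * (v * u^-1) by rewrite /y invMg e !mulgA.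
have yy : y * y \in H.
  have : (y * y)^-1 = v * u^-1.
    by apply/eqP; rewrite eq_invg_mul -mulgA -ey mulgV.
  by move=> h; rewrite -groupV h groupM ?groupV.
have yG : y \in G by rewrite groupM // (subsetP sHG).
have yH : y \notin H by rewrite groupMl.
rewrite -(ucos_trans yU); clearbody y.
case: (boolP (H \subset H :^ y^-1)) => [sHy|nsHy]; last first.
  by apply: (localC sHG defH pH yG yH); right.
have [t yt tt] := invol_exists sHG cH pH ntH yG yH yy sHy noK.
have ti : t^-1 = t by rewrite -[t^-1]mulg1 -tt mulKg.
have yN : y \in 'N(H).
  rewrite -groupV; apply/normP/esym/eqP; rewrite eqEcard sHy cardJg leqnn //.
exists [set t]; apply/and3P; split.
- rewrite sub1set inE; apply/orP; left; apply/dcosP; exists 1 => //.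
  by exists (y^-1 * t) => //; rewrite mul1g mulKVg.
- by apply/forall_inP => s; rewrite inE => /eqP ->; rewrite ti inE.
apply/forall_inP => z zU; apply: uniq_card; exists t => w; rewrite inE.
case: (eqVneq w t) => [->|] //=; apply/idP.
move: zU; rewrite inE => /orP[] /dcosP[a aH [b bH ->]].
  have -> : (a * y * b)^-1 * t = b^-1 * (a^-1 ^ y * (y^-1 * t)).
    by rewrite conjgE !invMg !mulgA mulgK.
  by rewrite groupM ?groupV // groupM // memJ_norm ?groupV.
have -> : (a * y^-1 * b)^-1 * t = b^-1 * (y * y * (a^-1 ^ y * (y^-1 * t))).
  by rewrite conjgE !invMg invgK !mulgA mulgK mulgK.
by rewrite groupM ?groupV // groupM // groupM // memJ_norm ?groupV.
Qed.


Unset Implicit Arguments. Set Strict Implicit. Set Printing Implicit Defensive.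

Theorem lemma3p2 (gT : finGroupType) (G H : {group gT}) :
  H \subset G -> cyclic H -> 2.-group H -> H :!=: 1 ->
  (subgroup_perfect_code G H <->
   ~ (exists K : {group gT},
        [/\ K \subset G, H \subset K, #|K| = (2 * #|H|)%N &
            (cyclic K \/ gen_quaternion K)])).
Proof.
move=> sHG cH pH ntH; split.
  case=> S [[sS Sinv] [_ indep pc]] [K [sKG sHK cardK hK]].
  have pK : 2.-group K by rewrite /pgroup cardK pnatM pnat_id.
  have ntK : K :!=: 1 := subG1_contra sHK ntH.
  have O2 : #|'Ohm_1(K)| = 2.
    apply/(prime_Ohm1P pK ntK); case: hK => [-> //|hq].
    by apply/orP; right; apply/andP; split=> //; apply/eqP/quaternion_classP.
  have OK : 'Ohm_1(H) = 'Ohm_1(K).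
    apply/eqP; rewrite eqEcard OhmS // O2 (Ohm1_cyclic_pgroup_prime cH pH ntH).
    by [].
  have invH : forall t, t \in K -> t * t = 1 -> t \in H.
    move=> t tK tt; apply: (subsetP (Ohm_sub 1 H)); rewrite OK (OhmE 1 pK).
    by rewrite mem_gen // !inE tK expn1 expg2 tt eqxx.
  have nKH : ~~ (K \subset H).
    apply/negP => /subset_leq_card; rewrite cardK -{2}(mul1n #|H|).
    by rewrite leq_pmul2r ?cardG_gt0.
  case/subsetPn: nKH => g gK gH.
  have gG := subsetP sKG g gK.
  have /eqP/cards1P[c hc] := pc g gG gH.
  have : c \in [set c in H | cay_adj S g c] by rewrite hc inE.
  rewrite inE /cay_adj => /andP[cH' tS].
  set t := g * c^-1 in tS.
  have tK : t \in K by rewrite groupM ?groupV // (subsetP sHK).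
  have tH : t \notin H by rewrite groupMr ?groupV.
  have tG := subsetP sKG t tK.
  have tt : t * t \in H.
    have i2 : #|K : H| = 2 by rewrite -divgS // cardK mulnK ?cardG_gt0.
    have tKH : t \in K :\: H by rewrite inE tH.
    have := rcoset_index2 sHK i2 tKH; move/setP/(_ t^-1).
    rewrite inE groupV groupV tK tH mem_rcoset => /= h.
    by have := h; rewrite -invMg groupV.
  have /eqP/cards1P[d hd] := pc t tG tH.
  have h1 : 1 \in [set c in H | cay_adj S t c].
    by rewrite inE group1 /cay_adj invg1 mulg1 tS.
  have h2 : t * t \in [set c in H | cay_adj S t c].
    by rewrite inE tt /cay_adj invMg mulgA mulgV mul1g Sinv.
  rewrite hd !inE in h1 h2.
  have ttt : t * t = 1 by rewrite (eqP h1) (eqP h2).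
  by move: tH; rewrite invH.
move=> noK.
pose f (U : {set gT}) := if [pick S0 | good H U S0] is Some S1 then S1 else set0.
have fgood : forall x, x \in G -> x \notin H -> good H (ucos H x) (f (ucos H x)).
  move=> x xG xH; rewrite /f; case: pickP => [S0 //|none].
  have [S0 gS] := local_all sHG cH pH ntH noK xG xH.
  by rewrite none in gS.
pose Sg := \bigcup_(x in G :\: H) f (ucos H x).
have Ssub : forall x w, x \in G :\: H -> w \in f (ucos H x) -> w \in G :\: H.
  move=> x w /setDP[xG xH] wf.
  have /and3P[sf _ _] := fgood x xG xH.
  exact: (subsetP (ucos_notin sHG xG xH)) _ (subsetP sf _ wf).
have SgG : forall w, w \in Sg -> w \in G :\: H.
  by move=> w /bigcupP[x xGH wf]; exact: Ssub wf.
exists Sg; split; first split.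
- apply/subsetP=> w /SgG /setDP[wG wH]; rewrite !inE wG andbT.
  by apply: contra wH => /eqP ->.
- move=> s /bigcupP[x xGH sf]; apply/bigcupP; exists x => //.
  case/setDP: xGH => xG xH.
  by have /and3P[_ /forall_inP inv _] := fgood x xG xH; apply: inv.
split=> //.
- move=> a b aH bH; rewrite /cay_adj; apply/negP => /SgG.
  by rewrite inE groupM ?groupV.
move=> g gG gH.
have -> : [set c in H | cay_adj Sg g c] = [set c in H | g * c^-1 \in f (ucos H g)].
  apply/setP=> c; rewrite !inE /cay_adj; case cH': (c \in H) => //=.
  apply/bigcupP/idP => [[x xGH wf]|wf]; last by exists g; rewrite // inE gG gH.
  have wU : g * c^-1 \in ucos H g.
    by apply: (ucos_coset (ucos_id H g)); rewrite mulKg groupV.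
  case/setDP: (xGH) => xG xH.
  have /and3P[sf _ _] := fgood x xG xH.
  have wUx := subsetP sf _ wf.
  by rewrite -(ucos_trans wU) (ucos_trans wUx).
have /and3P[_ _ /forall_inP u] := fgood g gG gH.
by apply/eqP; apply: u; apply: ucos_id.
Qed.
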